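(* Every pattern in $S_3$ other than $[123]$, namely $[132]$, $[213]$, $[231]$, $[312]$ and $[321]$, admits a bountiful width system.
   Context: For $x=[x_1,\dots,x_N]\in S_N$ and a pattern $\sigma\in S_k$, an instance of $\sigma$ in $x$ is a tuple of positions $P=(P_1<\dots<P_k)$ with $(x_{P_1},\dots,x_{P_k})$ in the same relative order as $(\sigma(1),\dots,\sigma(k))$. A width system for $\sigma$ is a finite sequence of pairs $(a_1,b_1),\dots,(a_m,b_m)$ with $1\le a_l<b_l\le k$; it assigns to each instance $P$ the tuple $w(P)=(P_{b_1}-P_{a_1},\dots,P_{b_m}-P_{a_m})$. An instance is minimal in $x$ if $w(P)$ is lexicographically minimal among all instances of $\sigma$ in $x$, and locally minimal if it is a minimal instance of $\sigma$ in the consecutive segment $[x_{P_1},x_{P_1+1},\dots,x_{P_k}]$. The width system is bountiful if for every $x\in S_N$ (any $N$), every locally minimal instance $P$ and every position $t$ with $P_1<t<P_k$, $t\notin\{P_1,\dots,P_k\}$, either $x_t<x_{P_j}$ for all $j$ with $P_j<t$, or $x_t>x_{P_j}$ for all $j$ with $P_j>t$. $\sigma$ admits a bountiful width system if some width system for $\sigma$ is bountiful. *)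

(* Defs.v *)
From mathcomp Require Import all_boot all_fingroup.
Set Implicit Arguments. Unset Strict Implicit. Unset Printing Implicit Defensive.

(* Conventions: sequences x are seq nat (a permutation x in S_N is a seq that is
   a rearrangement of 1..N); positions are 0-indexed; a pattern of length k.+1
   is sigma : 'S_k.+1 (values 0..k, relative order is what matters); an
   occurrence tuple P : 'I_k.+1 -> nat lists positions P_1 < ... < P_{k+1}. *)

Definition val_at (x : seq nat) (p : nat) : nat := nth 0 x p.

Definition instance (k : nat) (sigma : 'S_k.+1) (x : seq nat)
  (P : 'I_k.+1 -> nat) : Prop :=
  (forall i j : 'I_k.+1, i < j -> P i < P j) /\
  P ord_max < size x /\
  (forall i j : 'I_k.+1,
     (val_at x (P i) < val_at x (P j)) = (sigma i < sigma j)).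

Definition width_system (k : nat) (ws : seq (prod 'I_k.+1 'I_k.+1)) : bool :=
  all (fun ab : prod 'I_k.+1 'I_k.+1 => (nat_of_ord ab.1 < nat_of_ord ab.2)%N) ws.

Definition width (k : nat) (ws : seq (prod 'I_k.+1 'I_k.+1))
  (P : 'I_k.+1 -> nat) : seq nat :=
  map (fun ab : prod 'I_k.+1 'I_k.+1 => P ab.2 - P ab.1) ws.

Fixpoint lexle (s t : seq nat) : bool :=
  match s, t with
  | [::], _ => true
  | _ :: _, [::] => false
  | a :: s', b :: t' => (a < b) || ((a == b) && lexle s' t')
  end.

Definition minimal_instance (k : nat) (ws : seq (prod 'I_k.+1 'I_k.+1))
  (sigma : 'S_k.+1) (x : seq nat) (P : 'I_k.+1 -> nat) : Prop :=
  instance sigma x P /\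
  forall Q, instance sigma x Q -> lexle (width ws P) (width ws Q).

Definition segment (k : nat) (x : seq nat) (P : 'I_k.+1 -> nat) : seq nat :=
  take (P ord_max - P ord0).+1 (drop (P ord0) x).

Definition shift_inst (k : nat) (P : 'I_k.+1 -> nat) : 'I_k.+1 -> nat :=
  fun i => P i - P ord0.

Definition locally_minimal (k : nat) (ws : seq (prod 'I_k.+1 'I_k.+1))
  (sigma : 'S_k.+1) (x : seq nat) (P : 'I_k.+1 -> nat) : Prop :=
  instance sigma x P /\
  minimal_instance ws sigma (segment x P) (shift_inst P).

Definition bountiful (k : nat) (ws : seq (prod 'I_k.+1 'I_k.+1))
  (sigma : 'S_k.+1) : Prop :=
  forall (N : nat) (x : seq nat), perm_eq x (iota 1 N) ->
  forall P : 'I_k.+1 -> nat, locally_minimal ws sigma x P ->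
  forall t : nat, P ord0 < t < P ord_max -> (forall j, t != P j) ->
    (forall j, P j < t -> val_at x t < val_at x (P j)) \/
    (forall j, t < P j -> val_at x (P j) < val_at x t).

Definition admits_bountiful (k : nat) (sigma : 'S_k.+1) : Prop :=
  exists ws : seq (prod 'I_k.+1 'I_k.+1), width_system ws /\ bountiful ws sigma.

(* Main.v *)
Require Import Defs.
From mathcomp Require Import all_boot all_fingroup.
From mathcomp Require Import zify.

Definition i1 : 'I_3 := Ordinal (isT : 1 < 3).
Definition mk3 (q0 q1 q2 : nat) (i : 'I_3) : nat := nth 0 [:: q0; q1; q2] i.

Lemma ltb_fact (a b : nat) (c : bool) : (a < b) = c -> (c -> a < b) /\ (~~ c -> b <= a).
Proof. move=> <-; split => //; by rewrite -leqNgt. Qed.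

Lemma Ej (i : 'I_3) : i = ord0 \/ i = i1 \/ i = ord_max.
Proof.
case: i => [[|[|[|//]]] Hi]; [left|right;left|right;right]; exact: val_inj.
Qed.

Lemma lexle2 u1 u2 v1 v2 : lexle [:: u1; u2] [:: v1; v2] -> u1 < v1 \/ (u1 = v1 /\ u2 <= v2).
Proof.
rewrite /=; case/orP=> [h|/andP[/eqP e /orP[h|/andP[/eqP e2 _]]]]; first by left.
  by right; split => //; lia.
by right; split => //; lia.
Qed.

Lemma key ws (σ : 'S_3) x P q0 q1 q2 :
  locally_minimal ws σ x P -> P ord0 <= q0 -> q0 < q1 -> q1 < q2 -> q2 <= P ord_max ->
  (forall i j, (val_at x (mk3 q0 q1 q2 i) < val_at x (mk3 q0 q1 q2 j)) = (σ i < σ j)) ->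
  lexle (width ws P) (width ws (mk3 q0 q1 q2)).
Proof.
case=> [[Hmono [Hsz Hval]] [_ Hmin]] h0 h01 h12 h2 HQ.
have P0le : forall i, P ord0 <= P i.
  move=> i; case: (Ej i) => [->//|[->|->]]; by apply/ltnW/Hmono.
have Qge : forall i : 'I_3, P ord0 <= mk3 q0 q1 q2 i /\ mk3 q0 q1 q2 i <= P ord_max.
  by move=> [[|[|[|//]]] Hi] /=; rewrite /mk3 /=; lia.
have Hm := Hmin (mk3 (q0 - P ord0) (q1 - P ord0) (q2 - P ord0)).
have EP : width ws (shift_inst P) = width ws P.
  apply: eq_map => -[u v] /=; rewrite /shift_inst. have := P0le u; have := P0le v; move: (P ord0) (P u) (P v) => p0 pu pv *; lia.
have E2 : width ws (mk3 (q0 - P ord0) (q1 - P ord0) (q2 - P ord0)) = width ws (mk3 q0 q1 q2).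
  apply: eq_map => -[u v] /=.
  have Hw : forall w : 'I_3, mk3 (q0 - P ord0) (q1 - P ord0) (q2 - P ord0) w = mk3 q0 q1 q2 w - P ord0.
    by move=> [[|[|[|//]]] Hi].
  rewrite !Hw. have := Qge u; have := Qge v; move: (P ord0) (mk3 q0 q1 q2 u) (mk3 q0 q1 q2 v) => p0 pu pv *; lia.
rewrite EP E2 in Hm; apply: Hm. split; [|split].
- move=> [[|[|[|//]]] Hi] [[|[|[|//]]] Hj]; rewrite /mk3 /=; lia.
- rewrite /segment size_take size_drop /mk3 /=; case: ifP => _; lia.
- have E : forall i, val_at (segment x P) (mk3 (q0 - P ord0) (q1 - P ord0) (q2 - P ord0) i) = val_at x (mk3 q0 q1 q2 i).
    move=> i; have [qa qb] := Qge i.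
    have Hw : mk3 (q0 - P ord0) (q1 - P ord0) (q2 - P ord0) i = mk3 q0 q1 q2 i - P ord0.
      by case: i {qa qb} => [[|[|[|//]]] Hi].
    rewrite Hw /val_at /segment nth_take ?nth_drop; last by lia.
    congr nth; lia.
  by move=> i j; rewrite !E.
Qed.

Lemma reduce ws (σ : 'S_3) :
 (forall (x : seq nat) P t, uniq x -> locally_minimal ws σ x P -> P ord0 < t -> t < P ord_max -> t != P i1 ->
   (t < P i1 -> val_at x t < val_at x (P ord0) \/
        (val_at x (P i1) < val_at x t /\ val_at x (P ord_max) < val_at x t)) /\
   (P i1 < t -> (val_at x t < val_at x (P ord0) /\ val_at x t < val_at x (P i1)) \/
        val_at x (P ord_max) < val_at x t))
 -> bountiful ws σ.
Proof.
move=> H N x Hp P Hlm t /andP[ht0 ht2] Hne.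
have Hu : uniq x by rewrite (perm_uniq Hp) iota_uniq.
have [Ha Hb] := H x P t Hu Hlm ht0 ht2 (Hne i1).
have [[Hmono _] _] := Hlm.
have m01 := Hmono ord0 i1 isT; have m12 := Hmono i1 ord_max isT.
case: (ltngtP t (P i1)) => [tb|bt|e]; last by move: (Hne i1); rewrite e eqxx.
- case: (Ha tb) => [h|[h1 h2]]; [left|right] => j; case: (Ej j) => [->|[->|->]] hj //; lia.
- case: (Hb bt) => [[h1 h2]|h]; [left|right] => j; case: (Ej j) => [->|[->|->]] hj //; lia.
Qed.

Ltac inst H := move=> [[|[|[|//]]] ?] [[|[|[|//]]] ?];
  rewrite !H /mk3 /=; apply/idP/idP; lia.

Ltac kill H q0 q1 q2 :=
  have /lexle2 := @key _ _ _ _ q0 q1 q2 ltac:(eassumption) ltac:(lia) ltac:(lia) ltac:(lia) ltac:(lia) ltac:(inst H);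
  rewrite /mk3 /=; lia.

Lemma pat132 (σ : 'S_3) : (forall i : 'I_3, (σ i : nat) = nth 0 [:: 0; 2; 1] i) ->
  bountiful [:: (ord0, ord_max); (ord0, i1)] σ.
Proof.
move=> H.
apply: reduce => x P t Hu Hlm ht0 ht2 hne.
  have [[Hmono [Hsz Hval]] _] := Hlm.
  have m01 := Hmono ord0 i1 isT; have m12 := Hmono i1 ord_max isT.
  have o01 := Hval ord0 i1; have o02 := Hval ord0 ord_max; have o12 := Hval i1 ord_max.
  have o10 := Hval i1 ord0; have o20 := Hval ord_max ord0; have o21 := Hval ord_max i1.
  rewrite !H /= in o01 o02 o12 o10 o20 o21.
  move/ltb_fact: o01 => o01; move/ltb_fact: o02 => o02; move/ltb_fact: o12 => o12.
  move/ltb_fact: o10 => o10; move/ltb_fact: o20 => o20; move/ltb_fact: o21 => o21.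
  have hd : forall p q, p < size x -> q < size x -> p != q -> val_at x p != val_at x q
    by move=> p q hp hq; rewrite /val_at nth_uniq.
  have d0 : val_at x t != val_at x (P ord0) by apply: hd; lia.
  have d1 : val_at x t != val_at x (P i1) by apply: hd; lia.
  have d2 : val_at x t != val_at x (P ord_max) by apply: hd; lia.
split=> hb.
- case: (ltnP (val_at x t) (val_at x (P ord0))) => h1; first by left.
  case: (ltnP (val_at x (P i1)) (val_at x t)) => h2; first by right; lia.
  case: (ltnP (val_at x (P ord_max)) (val_at x t)) => h3.
  + kill H (P ord0) t (P ord_max).
  + kill H t (P i1) (P ord_max).
- case: (ltnP (val_at x (P ord_max)) (val_at x t)) => h3; first by right.
  left. case: (ltnP (val_at x t) (val_at x (P ord0))) => h1; first lia.
  kill H (P ord0) (P i1) t.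
Qed.

Lemma pat213 (σ : 'S_3) : (forall i : 'I_3, (σ i : nat) = nth 0 [:: 1; 0; 2] i) ->
  bountiful [:: (ord0, ord_max); (i1, ord_max)] σ.
Proof.
move=> H.
apply: reduce => x P t Hu Hlm ht0 ht2 hne.
  have [[Hmono [Hsz Hval]] _] := Hlm.
  have m01 := Hmono ord0 i1 isT; have m12 := Hmono i1 ord_max isT.
  have o01 := Hval ord0 i1; have o02 := Hval ord0 ord_max; have o12 := Hval i1 ord_max.
  have o10 := Hval i1 ord0; have o20 := Hval ord_max ord0; have o21 := Hval ord_max i1.
  rewrite !H /= in o01 o02 o12 o10 o20 o21.
  move/ltb_fact: o01 => o01; move/ltb_fact: o02 => o02; move/ltb_fact: o12 => o12.
  move/ltb_fact: o10 => o10; move/ltb_fact: o20 => o20; move/ltb_fact: o21 => o21.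
  have hd : forall p q, p < size x -> q < size x -> p != q -> val_at x p != val_at x q
    by move=> p q hp hq; rewrite /val_at nth_uniq.
  have d0 : val_at x t != val_at x (P ord0) by apply: hd; lia.
  have d1 : val_at x t != val_at x (P i1) by apply: hd; lia.
  have d2 : val_at x t != val_at x (P ord_max) by apply: hd; lia.
split=> hb.
- case: (ltnP (val_at x t) (val_at x (P ord0))) => ?; first by left.
  case: (ltnP (val_at x (P ord_max)) (val_at x t)) => ?; first by right; lia.
  kill H t (P i1) (P ord_max).
- case: (ltnP (val_at x (P ord_max)) (val_at x t)) => ?; first by right.
  case: (ltnP (val_at x t) (val_at x (P i1))) => ?; first by left; lia.
  case: (ltnP (val_at x (P ord0)) (val_at x t)) => ?.
  + kill H (P ord0) (P i1) t.
  + kill H (P ord0) t (P ord_max).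
Qed.

Lemma pat231 (σ : 'S_3) : (forall i : 'I_3, (σ i : nat) = nth 0 [:: 1; 2; 0] i) ->
  bountiful [:: (ord0, ord_max); (ord0, i1)] σ.
Proof.
move=> H.
apply: reduce => x P t Hu Hlm ht0 ht2 hne.
  have [[Hmono [Hsz Hval]] _] := Hlm.
  have m01 := Hmono ord0 i1 isT; have m12 := Hmono i1 ord_max isT.
  have o01 := Hval ord0 i1; have o02 := Hval ord0 ord_max; have o12 := Hval i1 ord_max.
  have o10 := Hval i1 ord0; have o20 := Hval ord_max ord0; have o21 := Hval ord_max i1.
  rewrite !H /= in o01 o02 o12 o10 o20 o21.
  move/ltb_fact: o01 => o01; move/ltb_fact: o02 => o02; move/ltb_fact: o12 => o12.
  move/ltb_fact: o10 => o10; move/ltb_fact: o20 => o20; move/ltb_fact: o21 => o21.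
  have hd : forall p q, p < size x -> q < size x -> p != q -> val_at x p != val_at x q
    by move=> p q hp hq; rewrite /val_at nth_uniq.
  have d0 : val_at x t != val_at x (P ord0) by apply: hd; lia.
  have d1 : val_at x t != val_at x (P i1) by apply: hd; lia.
  have d2 : val_at x t != val_at x (P ord_max) by apply: hd; lia.
split=> hb.
- case: (ltnP (val_at x t) (val_at x (P ord0))) => ?; first by left.
  case: (ltnP (val_at x (P i1)) (val_at x t)) => ?; first by right; lia.
  kill H t (P i1) (P ord_max).
- case: (ltnP (val_at x (P ord_max)) (val_at x t)) => ?; first by right.
  left; lia.
Qed.

Lemma pat312 (σ : 'S_3) : (forall i : 'I_3, (σ i : nat) = nth 0 [:: 2; 0; 1] i) ->
  bountiful [:: (ord0, ord_max); (ord0, i1)] σ.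
Proof.
move=> H.
apply: reduce => x P t Hu Hlm ht0 ht2 hne.
  have [[Hmono [Hsz Hval]] _] := Hlm.
  have m01 := Hmono ord0 i1 isT; have m12 := Hmono i1 ord_max isT.
  have o01 := Hval ord0 i1; have o02 := Hval ord0 ord_max; have o12 := Hval i1 ord_max.
  have o10 := Hval i1 ord0; have o20 := Hval ord_max ord0; have o21 := Hval ord_max i1.
  rewrite !H /= in o01 o02 o12 o10 o20 o21.
  move/ltb_fact: o01 => o01; move/ltb_fact: o02 => o02; move/ltb_fact: o12 => o12.
  move/ltb_fact: o10 => o10; move/ltb_fact: o20 => o20; move/ltb_fact: o21 => o21.
  have hd : forall p q, p < size x -> q < size x -> p != q -> val_at x p != val_at x q
    by move=> p q hp hq; rewrite /val_at nth_uniq.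
  have d0 : val_at x t != val_at x (P ord0) by apply: hd; lia.
  have d1 : val_at x t != val_at x (P i1) by apply: hd; lia.
  have d2 : val_at x t != val_at x (P ord_max) by apply: hd; lia.
split=> hb.
- case: (ltnP (val_at x t) (val_at x (P ord0))) => ?; first by left.
  right; lia.
- case: (ltnP (val_at x (P ord_max)) (val_at x t)) => ?; first by right.
  case: (ltnP (val_at x t) (val_at x (P i1))) => ?; first by left; lia.
  kill H (P ord0) (P i1) t.
Qed.

Lemma pat321 (σ : 'S_3) : (forall i : 'I_3, (σ i : nat) = nth 0 [:: 2; 1; 0] i) ->
  bountiful [:: (ord0, ord_max); (ord0, i1)] σ.
Proof.
move=> H.
apply: reduce => x P t Hu Hlm ht0 ht2 hne.
  have [[Hmono [Hsz Hval]] _] := Hlm.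
  have m01 := Hmono ord0 i1 isT; have m12 := Hmono i1 ord_max isT.
  have o01 := Hval ord0 i1; have o02 := Hval ord0 ord_max; have o12 := Hval i1 ord_max.
  have o10 := Hval i1 ord0; have o20 := Hval ord_max ord0; have o21 := Hval ord_max i1.
  rewrite !H /= in o01 o02 o12 o10 o20 o21.
  move/ltb_fact: o01 => o01; move/ltb_fact: o02 => o02; move/ltb_fact: o12 => o12.
  move/ltb_fact: o10 => o10; move/ltb_fact: o20 => o20; move/ltb_fact: o21 => o21.
  have hd : forall p q, p < size x -> q < size x -> p != q -> val_at x p != val_at x q
    by move=> p q hp hq; rewrite /val_at nth_uniq.
  have d0 : val_at x t != val_at x (P ord0) by apply: hd; lia.
  have d1 : val_at x t != val_at x (P i1) by apply: hd; lia.
  have d2 : val_at x t != val_at x (P ord_max) by apply: hd; lia.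
split=> hb.
- case: (ltnP (val_at x t) (val_at x (P ord0))) => ?; first by left.
  right; lia.
- case: (ltnP (val_at x (P ord_max)) (val_at x t)) => ?; first by right.
  left; lia.
Qed.

Theorem mainTheorem15 (sigma : 'S_3) : sigma != 1%g -> admits_bountiful sigma.
Proof.
move=> Hne.
have Hσ : forall i : 'I_3, (sigma i : nat) =
   nth 0 [:: nat_of_ord (sigma ord0); nat_of_ord (sigma i1); nat_of_ord (sigma ord_max)] i.
  by move=> i; case: (Ej i) => [->|[->|->]].
have d01 : (sigma ord0 : nat) != sigma i1 by rewrite val_eqE (inj_eq perm_inj).
have d02 : (sigma ord0 : nat) != sigma ord_max by rewrite val_eqE (inj_eq perm_inj).
have d12 : (sigma i1 : nat) != sigma ord_max by rewrite val_eqE (inj_eq perm_inj).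
have Hid : ~ [/\ (sigma ord0 : nat) = 0, (sigma i1 : nat) = 1 & (sigma ord_max : nat) = 2].
  case=> e0 e1 e2; move/eqP: Hne; apply; apply/permP => i; rewrite perm1; apply/val_inj.
  by case: (Ej i) => [->|[->|->]].
move: Hσ d01 d02 d12 Hid.
case: (sigma ord0) => [[|[|[|//]]] ?]; case: (sigma i1) => [[|[|[|//]]] ?];
  case: (sigma ord_max) => [[|[|[|//]]] ?] => /= Hσ d01 d02 d12 Hid //;
  first [ by exfalso; apply: Hid
        | by exists [:: (ord0, ord_max); (i1, ord_max)]; split => //; exact: pat213 Hσ
        | by exists [:: (ord0, ord_max); (ord0, i1)]; split => //;
             first [exact: pat132 Hσ | exact: pat231 Hσ | exact: pat312 Hσ | exact: pat321 Hσ] ].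
Qed.
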